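(* Let $\mathcal{S}$ be a normal SPN over Boolean variables $X_1,\ldots,X_N$ and let $\mathcal{B}$ be the Bayesian network with ADD CPDs constructed from $\mathcal{S}$ as described in the context. Then $\Pr_{\mathcal{S}}(\mathbf{x})=\Pr_{\mathcal{B}}(\mathbf{x})$ for all assignments $\mathbf{x}$ of $X_1,\ldots,X_N$, where $\Pr_{\mathcal{B}}(\mathbf{x})=\sum_{\mathbf{h}}\Pr_{\mathcal{B}}(\mathbf{x},\mathbf{h})$ is the marginal over the observable variables, the sum ranging over joint assignments $\mathbf{h}$ of all hidden variables and $\Pr_{\mathcal{B}}(\mathbf{x},\mathbf{h})$ being the product of the CPDs of all variables of $\mathcal{B}$.
   Context: SPNs. Let $X_1,\ldots,X_N$ be Boolean variables. An SPN is a finite rooted DAG whose internal nodes are sum and product nodes, each edge $(v,u)$ out of a sum node carrying a weight $w_{v,u}\ge 0$, and whose terminal nodes are indicators $\mathbb{I}_{x_n},\mathbb{I}_{\bar x_n}$ or univariate distribution nodes over some $X_n$ with parameter $p\in[0,1]$ (value $p\mathbb{I}_{x_n}+(1-p)\mathbb{I}_{\bar x_n}$, where for an assignment $\mathbf{x}$, $\mathbb{I}_{x_n}=1$ iff $X_n$ is true and $\mathbb{I}_{\bar x_n}=1-\mathbb{I}_{x_n}$); products multiply their children's values, sum nodes take $\sum_u w_{v,u}\mathrm{val}(u)$, $f_{\mathcal{S}}(\mathbf{x})$ is the root value and $\Pr_{\mathcal{S}}(\mathbf{x})=f_{\mathcal{S}}(\mathbf{x})/\sum_{\mathbf{x}'}f_{\mathcal{S}}(\mathbf{x}')$.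 The scope of a terminal node over $X_n$ is $\{X_n\}$; an internal node's scope is the union of its children's scopes. The SPN is over $X_1,\ldots,X_N$ if the root's scope is $\{X_1,\ldots,X_N\}$. It is normal if (1) it is complete (children of each sum node have equal scopes) and decomposable (children of each product node have pairwise disjoint scopes); (2) the weights leaving each sum node are nonnegative and sum to 1; (3) every terminal node is a univariate distribution node and every sum node has scope size at least 2. Construction. From a normal SPN $\mathcal{S}$ over $X_1,\ldots,X_N$ build a Bayesian network $\mathcal{B}$: its variables are the observable variables $X_1,\ldots,X_N$ and, for each sum node $v$ with children $u_1,\ldots,u_l$, a hidden variable $H_v$ with values $\{1,\ldots,l\}$; its edges are exactly $H_v\to X$ for each sum node $v$ and each $X\in\mathrm{scope}(v)$. The CPD of $H_v$ is the decision stump $\mathcal{A}_{H_v}$: $\Pr(H_v=i)=w_{v,u_i}$. The CPD of $X$ is the ADD $\mathcal{A}_X$ obtained by taking the subgraph of $\mathcal{S}$ induced by the nodes whose scope contains $X$ (in which each product node has exactly one child), contracting every product node (connecting each of its parents to its unique child and deleting it; if it is the root, its child becomes the root), turning each sum node $v$ into an ADD node labelled $H_v$ whose $i$-th out-edge goes to the image of its $i$-th child $u_i$, and keeping each terminal node (a univariate distribution over $X$) as an ADD terminal carrying that distribution; $\Pr(X=x\mid \mathrm{Pa}(X)=\mathbf{h})$ is the probability of $x$ under the distribution at the terminal reached by following $\mathcal{A}_X$ from its root according to $\mathbf{h}$. *)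

(* Defs.v *)
From HB Require Import structures.
From mathcomp Require Import all_boot all_order all_algebra.
Set Implicit Arguments.
Unset Strict Implicit.
Unset Printing Implicit Defensive.
Import Order.TTheory GRing.Theory Num.Theory.
Local Open Scope ring_scope.

(* Nodes of an SPN over Boolean variables X_0..X_{N-1} (paper: X_1..X_N),
   with node identifiers in 'I_M.  Children of sum nodes are listed in
   order u_1,..,u_l together with the edge weights w_{v,u_i}. *)
Inductive node (R : Type) (N M : nat) :=
| NSum  of seq ('I_M * R)
| NProd of seq 'I_M
| NInd  of 'I_N & bool         (* indicator I_{x_n} (true) / I_{~x_n} (false) *)
| NDist of 'I_N & R.

Arguments NSum {R N M}.
Arguments NProd {R N M}.
Arguments NInd {R N M}.
Arguments NDist {R N M}.

Section SPN.
Variables (R : realFieldType) (N M : nat).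
(* An SPN is a map from node identifiers 'I_M.+1 to nodes; the root is ord0. *)
Variable S : 'I_M.+1 -> node R N M.+1.

Definition children (nd : node R N M.+1) : seq 'I_M.+1 :=
  match nd with
  | NSum cs => map fst cs
  | NProd cs => cs
  | _ => [::]
  end.

Definition sum_children (nd : node R N M.+1) : seq ('I_M.+1 * R) :=
  if nd is NSum cs then cs else [::].

Definition is_sum (nd : node R N M.+1) : bool :=
  if nd is NSum _ then true else false.

(* Scope, by structural recursion with fuel (fuel M.+1 suffices: see wf). *)
Fixpoint scope_f (k : nat) (v : 'I_M.+1) (n : 'I_N) : bool :=
  match k with
  | 0 => false
  | k'.+1 =>
    match S v with
    | NSum cs => has (fun c => scope_f k' c.1 n) cs
    | NProd cs => has (fun c => scope_f k' c n) cs
    | NInd m _ => m == n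
    | NDist m _ => m == n
    end
  end.

Definition scope (v : 'I_M.+1) (n : 'I_N) : bool := scope_f M.+1 v n.

Fixpoint val_f (k : nat) (x : {ffun 'I_N -> bool}) (v : 'I_M.+1) : R :=
  match k with
  | 0 => 0
  | k'.+1 =>
    match S v with
    | NSum cs => \sum_(c <- cs) c.2 * val_f k' x c.1
    | NProd cs => \prod_(c <- cs) val_f k' x c
    | NInd m b => if x m == b then 1 else 0
    | NDist m p => if x m then p else 1 - p
    end
  end.

Definition spn_val (x : {ffun 'I_N -> bool}) : R := val_f M.+1 x ord0.

Definition PrS (x : {ffun 'I_N -> bool}) : R :=
  spn_val x / \sum_(x' : {ffun 'I_N -> bool}) spn_val x'.

(* Well-formedness of an SPN: finite rooted DAG (node ids in a topological
   order: every child has a larger id than its parent, every non-root node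
   has a parent, so all nodes are reachable from the root ord0), internal
   nodes have (distinct) children, nonnegative weights, parameters in [0,1]. *)
Definition spn_wf : Prop :=
  (forall v c, c \in children (S v) -> (v < c)%N) /\
  (forall v : 'I_M.+1, v != ord0 -> exists u, v \in children (S u)) /\
  (forall v cs, S v = NSum cs -> cs != [::] /\ uniq (map fst cs)) /\
  (forall v cs, S v = NProd cs -> cs != [::] /\ uniq cs) /\
  (forall v cs, S v = NSum cs -> forall c, c \in cs -> 0 <= c.2) /\
  (forall v n p, S v = NDist n p -> 0 <= p <= 1).

Definition spn_over : Prop := forall n : 'I_N, scope ord0 n.

Definition complete : Prop :=
  forall v cs, S v = NSum cs ->
    forall c1 c2, c1 \in cs -> c2 \in cs -> forall n, scope c1.1 n = scope c2.1 n.

Definition decomposable : Prop :=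
  forall v cs, S v = NProd cs ->
    forall c1 c2, c1 \in cs -> c2 \in cs -> c1 != c2 ->
      forall n, ~~ (scope c1 n && scope c2 n).

Definition normal : Prop :=
  [/\ complete, decomposable,
      forall v cs, S v = NSum cs -> \sum_(c <- cs) c.2 = 1,
      forall v n b, S v <> NInd n b
    & forall v cs, S v = NSum cs -> (2 <= #|[pred n | scope v n]|)%N].

(* Hidden variables: one H_v per sum node v, with values 'I_l (0-based
   version of {1,..,l}), l = number of children of v. *)
Definition sumnode := {v : 'I_M.+1 | is_sum (S v)}.
Definition nch (v : 'I_M.+1) : nat := size (sum_children (S v)).

Definition hassign := {dffun forall s : sumnode, 'I_(nch (val s))}.

Definition h_at (h : hassign) (v : 'I_M.+1) : nat :=
  match @insub _ (fun v => is_sum (S v)) sumnode v with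
  | Some s => nat_of_ord (h s)
  | None => 0%N
  end.

Definition hidden_cpd (s : sumnode) (i : 'I_(nch (val s))) : R :=
  nth 0 (map snd (sum_children (S (val s)))) i.

(* Following the ADD A_X from its root according to h: on the subgraph of
   nodes whose scope contains X_n, a sum node v (ADD node labelled H_v)
   goes to its (h v)-th child, a product node is contracted (we go to its
   unique child whose scope contains X_n), and a terminal returns the
   parameter of its distribution over X_n. *)
Fixpoint add_walk (k : nat) (n : 'I_N) (h : hassign) (v : 'I_M.+1) : option R :=
  match k with
  | 0 => None
  | k'.+1 =>
    match S v with
    | NSum cs =>
        match nth None (map (fun c => Some c.1) cs) (h_at h v) with
        | Some c => add_walk k' n h c
        | None => None
        end
    | NProd cs =>
        match [seq c <- cs | scope c n] with
        | c :: _ => add_walk k' n h c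
        | [::] => None
        end
    | NInd _ b => Some (if b then 1 else 0)
    | NDist _ p => Some p
    end
  end.

Definition obs_cpd (n : 'I_N) (b : bool) (h : hassign) : R :=
  match add_walk M.+1 n h ord0 with
  | Some p => if b then p else 1 - p
  | None => 0
  end.

Definition PrB_joint (x : {ffun 'I_N -> bool}) (h : hassign) : R :=
  (\prod_(s : sumnode) hidden_cpd (h s)) * \prod_(n : 'I_N) obs_cpd n (x n) h.

Definition PrB (x : {ffun 'I_N -> bool}) : R :=
  \sum_(h : hassign) PrB_joint x h.

End SPN.

(* Main.v *)
Require Import Defs.
From mathcomp Require Import all_boot all_order all_algebra.
From mathcomp Require Import zify ring lra.
Set Implicit Arguments. Unset Strict Implicit. Unset Printing Implicit Defensive.
Import Order.TTheory GRing.Theory Num.Theory.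
Local Open Scope ring_scope.

Section Distr.
Variable R : comRingType.
Lemma dffun_distr (I : finType) (T_ : I -> finType) (F : forall i, T_ i -> R) :
  \sum_(h : {dffun forall i, T_ i}) \prod_i F i (h i) = \prod_i \sum_(t : T_ i) F i t.
Proof.
rewrite (reindex (@dffun_of_fprod I T_)); last exact/onW_bij/dffun_of_fprod_bij.
have := @big_fprod R 0 1 *%R +%R I T_ (fun i => [ffun t => F i t]).
move=> H.
transitivity (\sum_(t : fprod T_) \prod_(i in I) [ffun t => F i t] (t i)).
  apply: eq_bigr => t _; apply: eq_bigr => i _; rewrite ffunE.
  by rewrite /dffun_of_fprod ffunE.
rewrite H.
transitivity (\prod_i \sum_(j in tagged_with T_ i) untag 0 [ffun t => F i t] j).
  by rewrite (bigA_distr_big_dep (fun i => tagged_with T_ i) (fun i j => untag 0 [ffun t => F i t] j)).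
apply: eq_bigr => i _.
have := @big_tag R 0 +%R I T_ (fun i => [ffun t => F i t]) i.
by move=> <-; apply: eq_bigr => t _; rewrite ffunE.
Qed.
End Distr.

Section Expect.
Local Unset Implicit Arguments.
Variables (R : comRingType) (I : finType) (T_ : I -> finType) (W : forall i, T_ i -> R).
Hypothesis W1 : forall i, \sum_(t : T_ i) W i t = 1.
Local Notation H := {dffun forall i, T_ i}.
Definition wt (h : H) := \prod_i W i (h i).
Definition E (F : H -> R) := \sum_h wt h * F h.
Definition dep (F : H -> R) (P : pred I) :=
  forall h1 h2 : H, (forall i, P i -> h1 i = h2 i) -> F h1 = F h2.

Lemma E1 : E (fun _ => 1) = 1.
Proof.
rewrite /E /wt; under eq_bigr do rewrite mulr1.
rewrite dffun_distr; apply: big1 => i _; exact: W1.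
Qed.

Lemma Escale c F : E (fun h => c * F h) = c * E F.
Proof. rewrite /E mulr_sumr; apply: eq_bigr => h _; ring. Qed.

Lemma Econst c : E (fun _ => c) = c.
Proof. rewrite /E; have := E1; rewrite /E => e; rewrite -[RHS]mulr1 -e mulr_sumr; apply: eq_bigr => h _; ring. Qed.

Lemma Esum (J : Type) (r : seq J) F :
  E (fun h => \sum_(j <- r) F j h) = \sum_(j <- r) E (F j).
Proof.
rewrite /E exchange_big /=; apply: eq_bigr => h _; rewrite mulr_sumr //.
Qed.

Lemma Eext F G : (forall h, F h = G h) -> E F = E G.
Proof. by move=> FG; apply: eq_bigr => h _; rewrite FG. Qed.

Definition mrg (P : pred I) (h1 h2 : H) : H := [ffun i => if P i then h1 i else h2 i].

Lemma mrgE P h1 h2 i : mrg P h1 h2 i = if P i then h1 i else h2 i.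
Proof. by rewrite ffunE. Qed.

Lemma wt_mrg P h1 h2 : wt (mrg P h1 h2) * wt (mrg P h2 h1) = wt h1 * wt h2.
Proof.
rewrite /wt -!big_split /=; apply: eq_bigr => i _; rewrite !mrgE.
by case: (P i) => //; rewrite mulrC.
Qed.

Lemma Eindep (P1 P2 : pred I) (F1 F2 : H -> R) : (forall i, P1 i -> P2 i -> False) ->
  dep F1 P1 -> dep F2 P2 -> E (fun h => F1 h * F2 h) = E F1 * E F2.
Proof.
move=> disj d1 d2.
symmetry; rewrite /E mulr_suml.
under eq_bigr do rewrite mulr_sumr.
rewrite pair_big /=.
pose phi (p : H * H) := (mrg P1 p.1 p.2, mrg P1 p.2 p.1).
have phiK : cancel phi phi.
  move=> [a b]; rewrite /phi /=; congr pair; apply/ffunP => i;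
    rewrite !mrgE; by case: (P1 i).
rewrite (reindex_inj (can_inj phiK)) /=.
transitivity (\sum_(p : H * H) (wt p.1 * (F1 p.1 * F2 p.1)) * wt p.2).
  apply: eq_bigr => -[a b] _ /=.
  have e1 : F1 (mrg P1 a b) = F1 a by apply: d1 => i Pi; rewrite mrgE Pi.
  have e2 : F2 (mrg P1 b a) = F2 a.
    apply: d2 => i Pi; rewrite mrgE; case E1: (P1 i) => //; case: (disj i E1 Pi).
  rewrite e1 e2; have w := wt_mrg P1 a b.
  transitivity (wt (mrg P1 a b) * wt (mrg P1 b a) * (F1 a * F2 a)); first ring.
  rewrite w; ring.
rewrite -(@pair_big _ _ _ H H predT predT (fun x y => wt x * (F1 x * F2 x) * wt y)) /=; apply: eq_bigr => h _; rewrite -mulr_sumr.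
have := E1; rewrite /E; under eq_bigr do rewrite mulr1; move=> ->; ring.
Qed.

Lemma dep_mono F (P Q : pred I) : (forall i, P i -> Q i) -> dep F P -> dep F Q.
Proof. by move=> PQ d h1 h2 e; apply: d => i Pi; apply: e; apply: PQ. Qed.

Lemma Eprod (J : eqType) (r : seq J) (F : J -> H -> R) (D : J -> pred I) :
  uniq r -> (forall j, j \in r -> dep (F j) (D j)) ->
  (forall j1 j2, j1 \in r -> j2 \in r -> j1 != j2 -> forall i, D j1 i -> D j2 i -> False) ->
  E (fun h => \prod_(j <- r) F j h) = \prod_(j <- r) E (F j).
Proof.
elim: r => [|j r IH] /=.
  by move=> _ _ _; rewrite big_nil; under Eext do rewrite big_nil; rewrite Econst.
move=> /andP[jr ur] dF disj.
under Eext do rewrite big_cons.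
rewrite big_cons (@Eindep (D j) (fun i => has (fun jj => D jj i) r)).
- rewrite IH //.
  + by move=> j' j'r; apply: dF; rewrite inE j'r orbT.
  + by move=> j1 j2 h1 h2; apply: disj; rewrite inE ?h1 ?h2 orbT.
- move=> i Dji /hasP[j' j'r Dj'i]; apply: (disj j j' _ _ _ i Dji Dj'i).
  + by rewrite inE eqxx.
  + by rewrite inE j'r orbT.
  + by apply: contraNneq jr => ->.
- by apply: dF; rewrite inE eqxx.
- move=> h1 h2 e; apply: eq_big_seq => j' j'r; apply: (dF j'); first by rewrite inE j'r orbT.
  by move=> i Di; apply: e; apply/hasP; exists j'.
Qed.

Lemma Eind (i0 : I) (t0 : T_ i0) :
  E (fun h => if h i0 == t0 then 1 else 0) = W i0 t0.
Proof.
rewrite /E /wt.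
pose G i (t : T_ i) := W i t * (if i == i0 then (if (enum_rank t == enum_rank t0 :> nat) then 1 else 0) else 1).
transitivity (\sum_(h : H) \prod_i G i (h i)).
  apply: eq_bigr => h _; rewrite /G big_split /=; congr (_ * _).
  rewrite (bigD1 i0) //= eqxx big1 ?mulr1; last by move=> i /negPf ->.
  by rewrite (inj_eq val_inj) (inj_eq enum_rank_inj).
rewrite dffun_distr (bigD1 i0) //= [X in _ * X]big1 ?mulr1; last first.
  by move=> i /negPf ne; rewrite /G ne; under eq_bigr do rewrite mulr1; exact: W1.
rewrite /G eqxx (bigD1 t0) //= eqxx mulr1 big1 ?addr0 //.
by move=> t ne; rewrite (inj_eq val_inj) (inj_eq enum_rank_inj) (negPf ne) mulr0.
Qed.
End Expect.

Section SPNproof.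
Variables (R : realFieldType) (N M : nat) (S : 'I_M.+1 -> node R N M.+1).
Hypothesis wf1 : forall v c, c \in children (S v) -> (v < c)%N.

Lemma down_ind (P : 'I_M.+1 -> Prop) :
  (forall v : 'I_M.+1, (forall c : 'I_M.+1, (v < c)%N -> P c) -> P v) -> forall v, P v.
Proof.
move=> IH v; suff: forall k (v : 'I_M.+1), (M - v <= k)%N -> P v.
  by move=> /(_ M v); apply; lia.
elim=> [|k IHk] w hw; apply: IH => c wc.
  by exfalso; have := ltn_ord c; lia.
by apply: IHk; lia.
Qed.

Lemma child_lt (v c : 'I_M.+1) k : c \in children (S v) -> (M.+1 - v <= k.+1)%N -> (M.+1 - c <= k)%N.
Proof. move=> /wf1 vc; have := ltn_ord c; lia. Qed.

Lemma fuel0 (v : 'I_M.+1) : (M.+1 - v <= 0)%N -> False.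
Proof. have := ltn_ord v; lia. Qed.

Lemma scope_fuel k1 k2 (v : 'I_M.+1) (n : 'I_N) : (M.+1 - v <= k1)%N -> (M.+1 - v <= k2)%N ->
  scope_f S k1 v n = scope_f S k2 v n.
Proof.
elim: k1 k2 v => [|k1 IH] [|k2] v b1 b2; try by case: (fuel0 b1). all: try by case: (fuel0 b2).
have hc : forall c, c \in children (S v) -> (M.+1 - c <= k1)%N /\ (M.+1 - c <= k2)%N.
  by move=> c cin; split; apply: (child_lt cin).
rewrite /=; case E: (S v) hc => [cs|cs|m b|m p] // hc.
- apply: eq_in_has => c cin; have [] := hc c.1; first by rewrite /= map_f.
  exact: IH.
- apply: eq_in_has => c cin; have [] := hc c; first by [].
  exact: IH.
Qed.

Lemma val_fuel k1 k2 (x : {ffun 'I_N -> bool}) (v : 'I_M.+1) : (M.+1 - v <= k1)%N -> (M.+1 - v <= k2)%N ->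
  val_f S k1 x v = val_f S k2 x v.
Proof.
elim: k1 k2 v => [|k1 IH] [|k2] v b1 b2; try by case: (fuel0 b1). all: try by case: (fuel0 b2).
have hc : forall c, c \in children (S v) -> (M.+1 - c <= k1)%N /\ (M.+1 - c <= k2)%N.
  by move=> c cin; split; apply: (child_lt cin).
rewrite /=; case E: (S v) hc => [cs|cs|m b|m p] // hc.
- apply: eq_big_seq => c cin; have [] := hc c.1; first by rewrite /= map_f.
  by move=> h1 h2; rewrite (IH k2).
- apply: eq_big_seq => c cin; have [] := hc c; first by [].
  exact: IH.
Qed.

Lemma nth_some (cs : seq ('I_M.+1 * R)) i :
  nth None (map (fun c => Some c.1) cs) i =
  if (i < size cs)%N then Some (nth ord0 (map fst cs) i) else None.
Proof.
case: ifP => hi.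
  by rewrite (nth_map (ord0, 0)) // (nth_map (ord0, 0)).
by rewrite nth_default // size_map leqNgt hi.
Qed.

Lemma walk_fuel k1 k2 (n : 'I_N) (h : hassign S) (v : 'I_M.+1) : (M.+1 - v <= k1)%N -> (M.+1 - v <= k2)%N ->
  add_walk k1 n h v = add_walk k2 n h v.
Proof.
elim: k1 k2 v => [|k1 IH] [|k2] v b1 b2; try by case: (fuel0 b1). all: try by case: (fuel0 b2).
have hc : forall c, c \in children (S v) -> (M.+1 - c <= k1)%N /\ (M.+1 - c <= k2)%N.
  by move=> c cin; split; apply: (child_lt cin).
rewrite /=; case E: (S v) hc => [cs|cs|m b|m p] // hc.
- rewrite nth_some; case: ifP => // hi.
  have [] := hc (nth ord0 (map fst cs) (h_at h v)).
    by rewrite /= mem_nth // size_map.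
  exact: IH.
- case F: [seq c <- cs | scope S c n] => [|c l] //.
  have : c \in [seq c <- cs | scope S c n] by rewrite F inE eqxx.
  rewrite mem_filter => /andP[_ cin]; have [] := hc c; first by [].
  exact: IH.
Qed.

Local Notation sc := (scope S).
Local Notation fv x v := (val_f S M.+1 x v).
Local Notation aw n h v := (@add_walk R N M S M.+1 n h v).

Lemma cb (v c : 'I_M.+1) : c \in children (S v) ->
  (M.+1 - c <= M)%N /\ (M.+1 - c <= M.+1)%N.
Proof. move=> /wf1; have := ltn_ord c; lia. Qed.

Lemma scope_sum v cs n : S v = NSum cs -> sc v n = has (fun c => sc c.1 n) cs.
Proof.
move=> E; rewrite /scope /= E; apply: eq_in_has => c cin.
have [] := @cb v c.1; first by rewrite E /= map_f.
by move=> h1 h2; exact: (scope_fuel n h1 h2).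
Qed.

Lemma scope_prod v cs n : S v = NProd cs -> sc v n = has (fun c => sc c n) cs.
Proof.
move=> E; rewrite /scope /= E; apply: eq_in_has => c cin.
have [] := @cb v c; first by rewrite E.
by move=> h1 h2; exact: (scope_fuel n h1 h2).
Qed.

Lemma scope_dist v m p n : S v = NDist m p -> sc v n = (m == n).
Proof. by move=> E; rewrite /scope /= E. Qed.

Lemma val_sum x v cs : S v = NSum cs -> fv x v = \sum_(c <- cs) c.2 * fv x c.1.
Proof.
move=> E; rewrite /= E; apply: eq_big_seq => c cin.
have [] := @cb v c.1; first by rewrite E /= map_f.
by move=> h1 h2; congr (_ * _); exact: (val_fuel x h1 h2).
Qed.

Lemma val_prod x v cs : S v = NProd cs -> fv x v = \prod_(c <- cs) fv x c.
Proof.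
move=> E; rewrite /= E; apply: eq_big_seq => c cin.
have [] := @cb v c; first by rewrite E.
by move=> h1 h2; exact: (val_fuel x h1 h2).
Qed.

Lemma val_dist x v m p : S v = NDist m p -> fv x v = if x m then p else 1 - p.
Proof. by move=> E; rewrite /= E. Qed.

Lemma h_at_lt (h : hassign S) v cs : S v = NSum cs -> (h_at h v < size cs)%N.
Proof.
move=> E; rewrite /h_at; case: insubP => [s _ vs|].
  have e : size (sum_children (S (val s))) = size cs by rewrite vs E.
  by rewrite -e; exact: ltn_ord (h s).
by rewrite E.
Qed.

Lemma h_atE (h : hassign S) (s : sumnode S) : h_at h (val s) = h s.
Proof. by rewrite /h_at valK. Qed.

Lemma walk_sum n h v cs : S v = NSum cs ->
  aw n h v = aw n h (nth ord0 (map fst cs) (h_at h v)).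
Proof.
move=> E; rewrite /= E nth_some (h_at_lt h E).
have [] := @cb v (nth ord0 (map fst cs) (h_at h v)).
  by rewrite E /= mem_nth // size_map (h_at_lt h E).
by move=> h1 h2; exact: (walk_fuel n h h1 h2).
Qed.

Lemma walk_prod n h v cs : S v = NProd cs ->
  aw n h v = if [seq c <- cs | sc c n] is c :: _ then aw n h c else None.
Proof.
move=> E; rewrite /= E.
case F: [seq c <- cs | scope S c n] => [|c l] //.
have : c \in [seq c <- cs | scope S c n] by rewrite F inE eqxx.
rewrite mem_filter => /andP[_ cin]; have [] := @cb v c; first by rewrite E.
by move=> h1 h2; exact: (walk_fuel n h h1 h2).
Qed.

Lemma walk_dist n h v m p : S v = NDist m p -> aw n h v = Some p.
Proof. by move=> E; rewrite /= E. Qed.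

Lemma walk_ind n h v m b : S v = NInd m b -> aw n h v = Some (if b then 1 else 0).
Proof. by move=> E; rewrite /= E. Qed.

Hypothesis hcompl : complete S.
Hypothesis hdec : decomposable S.
Hypothesis hw1 : forall v cs, S v = NSum cs -> \sum_(c <- cs) c.2 = 1.
Hypothesis hnoind : forall v n b, S v <> NInd n b.
Hypothesis hsz : forall v cs, S v = NSum cs -> (2 <= #|[pred n | scope S v n]|)%N.
Hypothesis hpu : forall v cs, S v = NProd cs -> uniq cs.

Definition Tn (s : sumnode S) : finType := 'I_(nch S (val s)).
Definition Wt (s : sumnode S) (t : Tn s) : R := @hidden_cpd R N M S s t.
Local Notation EE := (E R (sumnode S) Tn Wt).
Local Notation dp := (dep R (sumnode S) Tn).
Local Notation EEext := (Eext R (sumnode S) Tn Wt _ _).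
Local Notation EEsum := (Esum R (sumnode S) Tn Wt).

Lemma sum_nth (L : seq ('I_M.+1 * R)) (F : 'I_M.+1 -> R) :
  \sum_(i < size L) nth 0 (map snd L) i * F (nth ord0 (map fst L) i) =
  \sum_(c <- L) c.2 * F c.1.
Proof.
rewrite (big_nth (ord0, 0)) big_mkord; apply: eq_bigr => i _.
by rewrite !(nth_map (ord0, 0)).
Qed.

Lemma sum_nth1 (L : seq ('I_M.+1 * R)) :
  \sum_(i < size L) nth 0 (map snd L) i = \sum_(c <- L) c.2.
Proof.
rewrite (big_nth (ord0, 0)) big_mkord; apply: eq_bigr => i _.
by rewrite !(nth_map (ord0, 0)).
Qed.

Lemma W1 : forall s : sumnode S, \sum_(t : Tn s) Wt t = 1.
Proof.
move=> s; rewrite /Wt /hidden_cpd /Tn /nch sum_nth1.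
have := valP s; case E: (S (val s)) => [cs| | |] //= _.
exact: hw1 E.
Qed.

Definition D (v : 'I_M.+1) (s : sumnode S) : bool :=
  (v <= val s)%N && [forall n, sc (val s) n ==> sc v n].

Lemma D_sub (v c : 'I_M.+1) : (v < c)%N -> (forall n, sc c n -> sc v n) ->
  forall s, D c s -> D v s.
Proof.
move=> vc scv s /andP[cs /forallP fa]; apply/andP; split; first by lia.
apply/forallP => n; apply/implyP => h; apply: scv; exact: (implyP (fa n)).
Qed.

Lemma sc_child_sum v cs c n : S v = NSum cs -> c \in map fst cs -> sc c n -> sc v n.
Proof. move=> E /mapP[p pin ->] h; rewrite (scope_sum _ E); apply/hasP; by exists p. Qed.

Lemma sc_child_prod v cs c n : S v = NProd cs -> c \in cs -> sc c n -> sc v n.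
Proof. move=> E cin h; rewrite (scope_prod _ E); apply/hasP; by exists c. Qed.

Lemma h_at_eq (h1 h2 : hassign S) v (pf : is_sum (S v)) :
  h1 (exist _ v pf) = h2 (exist _ v pf) -> h_at h1 v = h_at h2 v.
Proof. by rewrite /h_at insubT /= => ->. Qed.

Lemma walk_dep n v : forall h1 h2 : hassign S,
  (forall s, D v s -> h1 s = h2 s) -> aw n h1 v = aw n h2 v.
Proof.
elim/down_ind: v => v IH h1 h2 e.
case E: (S v) => [cs|cs|m b|m p].
- rewrite !(walk_sum _ _ E).
  have sv : is_sum (S v) by rewrite E.
  have -> : h_at h1 v = h_at h2 v.
    apply: (@h_at_eq h1 h2 v sv); apply: e.
    rewrite /D /= leqnn /=; apply/forallP => n'; exact/implyP.
  set c := nth ord0 _ _.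
  have cin : c \in map fst cs by rewrite mem_nth // size_map (h_at_lt h2 E).
  have vc : (v < c)%N by apply: wf1; rewrite E.
  apply: IH => // s Ds; apply: e; apply: (D_sub vc) => // n'.
  exact: sc_child_sum E cin.
- rewrite !(walk_prod _ _ E).
  case F: [seq c <- cs | sc c n] => [|c l] //.
  have : c \in [seq c <- cs | sc c n] by rewrite F inE eqxx.
  rewrite mem_filter => /andP[_ cin].
  have vc : (v < c)%N by apply: wf1; rewrite E.
  apply: IH => // s Ds; apply: e; apply: (D_sub vc) => // n'.
  exact: sc_child_prod E cin.
- by rewrite !(walk_ind _ _ E).
- by rewrite !(walk_dist _ _ E).
Qed.

Definition wcpd (b : bool) (o : option R) : R :=
  if o is Some p then (if b then p else 1 - p) else 0.

Definition G (v : 'I_M.+1) (x : {ffun 'I_N -> bool}) (h : hassign S) : R :=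
  \prod_(n | sc v n) wcpd (x n) (aw n h v).

Lemma G_dep v x : dp (G v x) (D v).
Proof. by move=> h1 h2 e; apply: eq_bigr => n _; rewrite (walk_dep n e). Qed.


Lemma part (cs : seq 'I_M.+1) (P : 'I_M.+1 -> pred 'I_N) (F : 'I_N -> R) :
  uniq cs ->
  (forall c1 c2, c1 \in cs -> c2 \in cs -> c1 != c2 -> forall n, ~~ (P c1 n && P c2 n)) ->
  \prod_(n | has (fun c => P c n) cs) F n = \prod_(c <- cs) \prod_(n | P c n) F n.
Proof.
elim: cs => [|c cs IH] /=.
  by move=> _ _; rewrite big_nil big_pred0.
move=> /andP[ccs ucs] dj.
rewrite big_cons (bigID (P c)) /=; congr (_ * _).
  by apply: eq_bigl => n /=; case: (P c n) => //=; rewrite andbF.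
rewrite -IH //; last first.
  by move=> c1 c2 h1 h2; apply: dj; rewrite inE ?h1 ?h2 orbT.
apply: eq_bigl => n; case Pc: (P c n) => /=; last by rewrite andbT.
apply/esym/negbTE/hasPn => c' c'in; apply/negP => Pc'.
have := dj c c'; rewrite inE eqxx inE c'in orbT => /(_ isT isT).
have -> : c != c' by apply: contraNneq ccs => ->.
by move=> /(_ isT n); rewrite Pc Pc'.
Qed.

Lemma walk_some v n (h : hassign S) : sc v n -> exists p, aw n h v = Some p.
Proof.
elim/down_ind: v => v IH.
case E: (S v) => [cs|cs|m b|m p] hs.
- rewrite (walk_sum _ _ E); set c := nth ord0 _ _.
  have cin : c \in map fst cs by rewrite mem_nth // size_map (h_at_lt h E).
  have vc : (v < c)%N by apply: wf1; rewrite E.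
  apply: IH => //.
  move: hs; rewrite (scope_sum _ E) => /hasP[p pin sp].
  case/mapP: cin => q qin ->.
  by rewrite (hcompl E qin pin).
- rewrite (walk_prod _ _ E).
  move: hs; rewrite (scope_prod _ E) => /hasP[c0 c0in sc0].
  have c0f : c0 \in [seq c <- cs | sc c n] by rewrite mem_filter sc0 c0in.
  case F: [seq c <- cs | sc c n] => [|c l]; first by rewrite F in c0f.
  have : c \in [seq c <- cs | sc c n] by rewrite F inE eqxx.
  rewrite mem_filter => /andP[scn cin].
  have vc : (v < c)%N by apply: wf1; rewrite E.
  exact: IH.
- by exists (if b then 1 else 0); rewrite (walk_ind _ _ E).
- by exists p; rewrite (walk_dist _ _ E).
Qed.

Lemma main v x : fv x v = EE (G v x).
Proof.
elim/down_ind: v => v IH.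
case E: (S v) => [cs|cs|m b|m p].
-
  have sv : is_sum (S v) by rewrite E.
  pose s : sumnode S := exist _ v sv.
  pose ch (j : nat) := nth ord0 (map fst (sum_children (S v))) j.
  have chE j : ch j = nth ord0 (map fst cs) j by rewrite /ch E.
  have chin (i : Tn s) : ch i \in map fst cs.
    rewrite chE mem_nth // size_map.
    have e : size (sum_children (S v)) = size cs by rewrite E.
    rewrite -e; exact: (ltn_ord i).
  have vch (i : Tn s) : (v < ch i)%N by apply: wf1; rewrite E /=; exact: chin.
  have scch (i : Tn s) n : sc v n = sc (ch i) n.
    rewrite (scope_sum _ E); case/mapP: (chin i) => q qin ->.
    apply/hasP/idP => [[p pin sp]|sq]; last by exists q.
    by rewrite (hcompl E qin pin).
  have step1 : forall h, G v x h = \sum_(i : Tn s) (if h s == i then 1 else 0) * G (ch i) x h.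
    move=> h; rewrite (bigD1 (h s)) //= eqxx mul1r big1 ?addr0; last first.
      by move=> i /negPf; rewrite eq_sym => ->; rewrite mul0r.
    rewrite /G; apply: eq_big => [n|n _]; first exact: scch.
    rewrite (walk_sum _ _ E) -chE.
    have -> : h_at h v = h s by exact: (h_atE h s).
    by [].
  rewrite (EEext step1) EEsum.
  transitivity (\sum_(i : Tn s) Wt i * fv x (ch i)); last first.
    apply: eq_bigr => i _.
    rewrite (@Eindep R (sumnode S) Tn Wt W1 (pred1 s) (D (ch i))).
    + by rewrite (Eind R (sumnode S) Tn Wt W1) IH.
    + move=> s0 /eqP -> /andP[h _]; have h2 : (ch i <= v)%N := h; have := vch i; by rewrite ltnNge h2.
    + by move=> h1 h2 e; rewrite (e s (eqxx s)).
    + exact: G_dep.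
  rewrite (val_sum x E).
  have -> : cs = sum_children (S v) by rewrite E.
  by rewrite -sum_nth.
-
  rewrite (val_prod x E).
  have ucs := hpu E.
  transitivity (\prod_(c <- cs) EE (G c x)).
    by apply: eq_big_seq => c cin; apply: IH; apply: wf1; rewrite E.
  rewrite -(@Eprod R (sumnode S) Tn Wt W1 _ cs (fun c => G c x) D ucs).
  + apply: EEext => h; rewrite /G.
    rewrite (eq_bigl (fun n => has (fun c => sc c n) cs)); last first.
      by move=> n; rewrite (scope_prod _ E).
    rewrite part; last first.
    * by move=> c1 c2 h1 h2 ne n; apply: hdec E c1 c2 h1 h2 ne n.
    * exact: ucs.
    apply: eq_big_seq => c cin; apply: eq_bigr => n scn.
    rewrite (walk_prod _ _ E).
    have : c \in [seq c <- cs | sc c n] by rewrite mem_filter scn.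
    case F: [seq c <- cs | sc c n] => [|c' l] //.
    have : c' \in [seq c <- cs | sc c n] by rewrite F inE eqxx.
    rewrite mem_filter => /andP[scn' c'in] _.
    case: (c' =P c) => [-> //|/eqP ne].
    by have := hdec E c'in cin ne n; rewrite scn scn'.
  + by move=> c _; exact: G_dep.
  + move=> c1 c2 c1in c2in ne s /andP[_ /forallP f1] /andP[_ /forallP f2].
    have Es : is_sum (S (val s)) := valP s.
    case Es' : (S (val s)) Es => [cs'| | |] // _.
    have [n nin] : exists n, n \in [pred n | sc (val s) n].
      by apply/card_gt0P; exact: ltnW (hsz Es').
    have := hdec E c1in c2in ne n.
    by rewrite (implyP (f1 n) nin) (implyP (f2 n) nin).
- by case: (hnoind E).
-
  rewrite (val_dist x E).
  transitivity (EE (fun _ => if x m then p else 1 - p)); last first.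
    apply: EEext => h; rewrite /G.
    rewrite (eq_bigl (fun n => n == m)); last first.
      by move=> n; rewrite (scope_dist _ E) eq_sym.
    by rewrite big_pred1_eq (walk_dist _ _ E).
  by rewrite (Econst R (sumnode S) Tn Wt W1).
Qed.


Hypothesis hover : spn_over S.

Lemma spn_valE x : spn_val S x = EE (fun h => \prod_n obs_cpd n (x n) h).
Proof.
rewrite /spn_val main; apply: EEext => h; rewrite /G.
rewrite (eq_bigl predT); last by move=> n; rewrite hover.
apply: eq_bigr => n _; rewrite /obs_cpd /wcpd.
by case: (add_walk _ _ _ _).
Qed.

Lemma Z1 : \sum_x spn_val S x = 1.
Proof.
rewrite (eq_bigr (fun x : {ffun 'I_N -> bool} => EE (fun h => \prod_n obs_cpd n (x n) h))); last first.
  by move=> x _; rewrite spn_valE.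
rewrite -EEsum.
transitivity (EE (fun _ => 1)); last exact: (E1 R (sumnode S) Tn Wt W1).
apply: EEext => h.
rewrite -(bigA_distr_bigA (fun (n : 'I_N) (b : bool) => obs_cpd n b h)) /=; apply: big1 => n _.
rewrite big_bool /obs_cpd.
have [p ->] := walk_some h (hover n).
by rewrite /= subrKC.
Qed.

Lemma final x : PrS S x = PrB S x.
Proof. by rewrite /PrS Z1 divr1 spn_valE. Qed.
End SPNproof.

Theorem theorem4 (R : realFieldType) (N M : nat) (S : 'I_M.+1 -> node R N M.+1) :
  spn_wf S -> spn_over S -> normal S ->
  forall x : {ffun 'I_N -> bool}, PrS S x = PrB S x.
Proof.
move=> [wf1 [_ [_ [hpu' _]]]] hover [hcompl hdec hw1 hnoind hsz] x.
apply: final => //.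
by move=> v cs e; case: (hpu' v cs e).
Qed.
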